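(* For $t>1$, let $\sigma_t=\prod_{n=1}^{\infty} n^{1/t^n}$. Then $$\gamma\!\left(\frac1t\right)=t\log\frac{t}{(t-1)\sigma_t^{\,t-1}}.$$ In particular, $$\lim_{t\to 0^+} t\,\sigma_{t+1}^{\,t}=e^{-\gamma},$$ where $\gamma=\gamma(1)$ is Euler's constant.
   Context: $\gamma(z)=\sum_{n=1}^{\infty} z^{n-1}\left(\frac{1}{n}-\log\frac{n+1}{n}\right)$ for $|z|\le1$. The product $\sigma_t=1^{1/t}2^{1/t^2}3^{1/t^3}\cdots$ (the generalized Somos constant) converges for $t>1$. *)

(* Defs.v *)
From Stdlib Require Import Reals.
From Coquelicot Require Import Coquelicot.
Open Scope R_scope.

(* gamma(z) = sum_{n>=1} z^(n-1) (1/n - log((n+1)/n)), reindexed with k = n-1. *)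
Definition gamma_fn (z : R) : R :=
  Series (fun k : nat => z ^ k * (/ INR (S k) - ln (INR (S (S k)) / INR (S k)))).

Fixpoint somos_partial (t : R) (N : nat) : R :=
  match N with
  | O => 1
  | S k => somos_partial t k * Rpower (INR (S k)) (/ t ^ (S k))
  end.

Definition somos_sigma (t : R) : R := real (Lim_seq (somos_partial t)).

(* Main.v *)
Require Import Defs.
From Stdlib Require Import Reals Lra Lia.
From Coquelicot Require Import Coquelicot.
Open Scope R_scope.

Lemma ln_le_sub1 z : 0 < z -> ln z <= z - 1.
Proof. intro Hz. pose proof (exp_ineq1_le (ln z)). rewrite exp_ln in H; lra. Qed.

Lemma radius_ge (a : nat -> R) : (forall n, Rabs (a n) <= 1) ->
  forall x, Rabs x < 1 -> Rbar_lt (Rabs x) (CV_radius a).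
Proof.
  intros Ha x Hx.
  assert (Hr : Rbar_le (Finite ((1 + Rabs x)/2)) (CV_radius a)).
  { destruct (CV_radius_bounded a) as [Hub _]. apply Hub.
    exists 1. intro n. rewrite Rabs_mult, <- RPow_abs.
    pose proof (Rabs_pos x).
    assert (Rabs ((1 + Rabs x)/2) ^ n <= 1).
    { apply (Rle_trans _ (1^n)); [apply pow_incr | rewrite pow1; lra]. split. apply Rabs_pos.
      rewrite Rabs_right; lra. }
    pose proof (Ha n). pose proof (Rabs_pos (a n)).
    pose proof (pow_le (Rabs ((1 + Rabs x)/2)) n (Rabs_pos _)).
    nra. }
  destruct (CV_radius a) as [r| |]; simpl in *; try tauto; lra.
Qed.

Lemma is_series_0 : is_series (fun _ : nat => 0) 0.
Proof.
  apply filterlim_ext with (fun _ => 0).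
  - intro n. rewrite sum_n_Reals. induction n; simpl; [reflexivity| rewrite <- IHn; ring].
  - apply filterlim_const.
Qed.

Lemma partial_le_Series (b : nat -> R) N : (forall n, 0 <= b n) -> ex_series b ->
  sum_f_R0 b N <= Series b.
Proof.
  intros Hb Hex. rewrite (Series_incr_n b (S N)); [|lia|exact Hex]. simpl.
  assert (0 <= Series (fun k => b (S (N + k)))).
  { rewrite <- (is_series_unique _ _ is_series_0).
    apply Series_le. intro n; split; [lra| apply Hb].
    apply (ex_series_incr_n b (S N)) in Hex. exact Hex. }
  lra.
Qed.

Definition cl (n : nat) : R := match n with O => 0 | S m => / INR (S m) end.

Lemma log_series_P x : 0 <= x < 1 -> PSeries cl x = - ln (1 - x).
Proof.
  intros Hx.
  assert (Hrad : forall y, Rabs y < 1 -> Rbar_lt (Rabs y) (CV_radius cl)).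
  { apply radius_ge. intros [|n]. simpl. rewrite Rabs_R0; lra.
    unfold cl. assert (1 <= INR (S n)) by (rewrite S_INR; pose proof (pos_INR n); lra).
    rewrite Rabs_right; [|left; apply Rinv_0_lt_compat; lra].
    apply Rle_trans with (/1); [apply Rinv_le_contravar; lra | rewrite Rinv_1; lra]. }
  destruct (Req_dec x 0) as [->|Hx0].
  { rewrite PSeries_0. simpl. replace (1-0) with 1 by ring. rewrite ln_1. ring. }
  set (h := fun y => plus (PSeries cl y) (ln (1 - y))).
  assert (H0 : h 0 = h x).
  { apply eq_is_derive; [|lra].
    intros t Ht. unfold h.
    replace (@zero R_NormedModule) with (plus (/ (1 - t)) (- / (1 - t))).
    2:{ unfold plus, zero; simpl. ring. }
    apply (@is_derive_plus R_AbsRing R_NormedModule (PSeries cl) (fun y => ln (1 - y))).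
    - assert (E : PSeries (PS_derive cl) t = / (1 - t)).
      { rewrite (PSeries_ext _ (fun _ => 1)).
        2:{ intro n. unfold PS_derive, cl. apply Rinv_r. rewrite S_INR; pose proof (pos_INR n); lra. }
        apply is_pseries_unique. apply is_pseries_R.
        apply is_series_ext with (fun n => t ^ n).
        intro n; simpl; ring. apply is_series_geom. rewrite Rabs_right; lra. }
      rewrite <- E. apply is_derive_PSeries. apply Hrad. rewrite Rabs_right; lra.
    - auto_derive. lra. field. lra. }
  unfold h in H0. rewrite PSeries_0 in H0. simpl in H0.
  replace (1 - 0) with 1 in H0 by ring. rewrite ln_1 in H0.
  unfold plus in H0; simpl in H0. lra.
Qed.

Lemma radius_cl y : Rabs y < 1 -> Rbar_lt (Rabs y) (CV_radius cl).
Proof.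
  apply radius_ge. intros [|n]. simpl. rewrite Rabs_R0; lra.
    unfold cl. assert (1 <= INR (S n)) by (rewrite S_INR; pose proof (pos_INR n); lra).
    rewrite Rabs_right; [|left; apply Rinv_0_lt_compat; lra].
    apply Rle_trans with (/1); [apply Rinv_le_contravar; lra | rewrite Rinv_1; lra].
Qed.

Lemma log_series x : 0 < x < 1 ->
  is_series (fun k => x ^ k * / INR (S k)) (- ln (1 - x) / x).
Proof.
  intros Hx.
  assert (H1 : is_series (fun n => cl n * x ^ n) (PSeries cl x)).
  { apply is_pseries_R. apply PSeries_correct. apply CV_radius_inside.
    apply radius_cl. rewrite Rabs_right; lra. }
  rewrite log_series_P in H1 by lra.
  assert (H2 : is_series (fun k => cl (S k) * x ^ (S k)) (- ln (1 - x))).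
  { apply (@is_series_incr_1 R_AbsRing R_NormedModule (fun n => cl n * x ^ n)). match goal with |- is_series _ ?l => replace l with (- ln (1 - x)) end.
    exact H1. unfold plus; simpl. ring. }
  apply is_series_scal_r with (c := / x) in H2.
  assert (E : forall n, cl (S n) * x ^ (S n) * / x = x ^ n * / INR (S n)).
  { intro n. unfold cl. change (x ^ S n) with (x * x ^ n).
    assert (INR (S n) <> 0) by (rewrite S_INR; pose proof (pos_INR n); lra).
    field. split; lra. }
  apply is_series_ext with (2 := H2). exact E.
Qed.

Definition u (x : R) (k : nat) : R := x ^ (S k) * ln (INR (S k)).

Lemma INRS_ge1 n : 1 <= INR (S n).
Proof. rewrite S_INR; pose proof (pos_INR n); lra. Qed.

Lemma somos_partial_exp t N : 0 < t ->
  somos_partial t (S N) = exp (sum_f_R0 (u (/ t)) N).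
Proof.
  intro Ht. induction N.
  - change (somos_partial t 1) with (1 * Rpower (INR 1) (/ t ^ 1)). unfold Rpower, u. change (sum_f_R0 (fun k => (/ t) ^ S k * ln (INR (S k))) 0) with ((/ t) ^ 1 * ln (INR 1)). rewrite pow_inv, Rmult_1_l. reflexivity.
  - change (somos_partial t (S (S N))) with (somos_partial t (S N) * Rpower (INR (S (S N))) (/ t ^ (S (S N)))).
    rewrite IHN. unfold Rpower. rewrite <- exp_plus. f_equal. change (sum_f_R0 (u (/t)) (S N)) with (sum_f_R0 (u (/t)) N + u (/t) (S N)). unfold u. rewrite !pow_inv. reflexivity.
Qed.

Lemma ex_series_u x : 0 < x < 1 -> ex_series (u x).
Proof.
  intro Hx.
  apply (@ex_series_le R_AbsRing R_CompleteNormedModule) with (b := fun k => Rabs (PS_derive (fun _ => 1) k * x ^ k)).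
  2:{ apply CV_disk_inside. rewrite CV_radius_derive. apply radius_ge.
      intro; rewrite Rabs_R1; lra. rewrite Rabs_right; lra. }
  intro k. change (norm (u x k)) with (Rabs (u x k)). unfold u, PS_derive.
  pose proof (INRS_ge1 k).
  assert (0 <= ln (INR (S k))) by (rewrite <- ln_1; apply ln_le; lra).
  pose proof (ln_le_sub1 (INR (S k)) ltac:(lra)).
  pose proof (pow_le x k ltac:(lra)).
  change (x ^ S k) with (x * x ^ k).
  rewrite !Rabs_right.
  - assert (x * ln (INR (S k)) <= INR (S k)) by nra.
    assert (x ^ k * (x * ln (INR (S k))) <= x ^ k * INR (S k)) by (apply Rmult_le_compat_l; lra).
    nra.
  - apply Rle_ge. apply Rmult_le_pos; nra.
  - apply Rle_ge. apply Rmult_le_pos; nra.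
Qed.

Lemma sigma_eq t : 1 < t -> somos_sigma t = exp (Series (u (/ t))).
Proof.
  intro Ht.
  assert (Hx : 0 < / t < 1).
  { split. apply Rinv_0_lt_compat; lra. rewrite <- Rinv_1. apply Rinv_lt_contravar; lra. }
  unfold somos_sigma.
  assert (is_lim_seq (somos_partial t) (exp (Series (u (/ t))))).
  { apply is_lim_seq_incr_1.
    apply is_lim_seq_ext with (fun n => exp (sum_f_R0 (u (/ t)) n)).
    intro n; symmetry; apply somos_partial_exp; lra.
    apply is_lim_seq_continuous. apply derivable_continuous_pt, derivable_pt_exp.
    apply is_lim_seq_ext with (sum_n (u (/ t))). intro n; apply sum_n_Reals.
    pose proof (Series_correct _ (ex_series_u _ Hx)). exact H. }
  rewrite (is_lim_seq_unique _ _ H). reflexivity.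
Qed.

Lemma key t : 1 < t ->
  gamma_fn (/ t) = t * (ln t - ln (t - 1)) - t * (t - 1) * Series (u (/ t)).
Proof.
  intro Ht.
  assert (Hx : 0 < / t < 1).
  { split. apply Rinv_0_lt_compat; lra. rewrite <- Rinv_1. apply Rinv_lt_contravar; lra. }
  set (x := / t) in *.
  set (L := Series (u x)).
  assert (HL : is_series (u x) L) by (apply Series_correct, ex_series_u, Hx).
  assert (B1 : is_series (fun k => x ^ k * ln (INR (S k))) (L * / x)).
  { apply is_series_scal_r with (c := / x) in HL.
    assert (E : forall k, u x k * / x = x ^ k * ln (INR (S k))).
    { intro k. unfold u. change (x ^ S k) with (x * x ^ k). field. lra. }
    apply is_series_ext with (2 := HL). exact E. }
  assert (B2 : is_series (fun k => x ^ k * ln (INR (S (S k)))) (L * / x ^ 2)).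
  { assert (H2 : is_series (fun k => u x (S k)) L).
    { apply (@is_series_incr_1 R_AbsRing R_NormedModule (u x)).
      match goal with |- is_series _ ?l => replace l with L end. exact HL.
      unfold plus, u; simpl. rewrite ln_1. ring. }
    apply is_series_scal_r with (c := / x ^ 2) in H2.
    assert (E : forall k, u x (S k) * / x ^ 2 = x ^ k * ln (INR (S (S k)))).
    { intro k. unfold u. change (x ^ S (S k)) with (x * (x * x ^ k)). field. lra. }
    apply is_series_ext with (2 := H2). exact E. }
  pose proof (log_series x Hx) as A1.
  pose proof (@is_series_minus R_AbsRing R_NormedModule _ _ _ _ B2 B1) as B3.
  pose proof (@is_series_minus R_AbsRing R_NormedModule _ _ _ _ A1 B3) as B4.
  assert (E : forall n, plus (x ^ n * / INR (S n))
      (opp (plus (x ^ n * ln (INR (S (S n)))) (opp (x ^ n * ln (INR (S n))))))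
     = x ^ n * (/ INR (S n) - ln (INR (S (S n)) / INR (S n)))).
  { intro n.
    pose proof (INRS_ge1 n). pose proof (INRS_ge1 (S n)).
    rewrite ln_div by lra. unfold plus, opp; simpl. ring. }
  apply is_series_ext with (1 := E) in B4.
  unfold gamma_fn. rewrite (is_series_unique _ _ B4).
  unfold plus, opp; simpl.
  replace (1 - x) with ((t - 1) / t) by (unfold x; field; lra).
  rewrite ln_div by lra.
  unfold x. field. lra.
Qed.

Definition ga (k : nat) : R := / INR (S k) - ln (INR (S (S k)) / INR (S k)).

Lemma ga_bounds k : 0 <= ga k <= / INR (S k) - / INR (S (S k)).
Proof.
  unfold ga. pose proof (INRS_ge1 k) as H1.
  assert (E : INR (S (S k)) = INR (S k) + 1) by (rewrite (S_INR (S k)); ring).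
  rewrite E. set (n := INR (S k)) in *.
  assert (Hy : 0 < (n + 1) / n) by (apply Rdiv_lt_0_compat; lra).
  pose proof (ln_le_sub1 _ Hy).
  assert (Hy' : 0 < / ((n + 1) / n)) by (apply Rinv_0_lt_compat; lra).
  pose proof (ln_le_sub1 _ Hy'). rewrite ln_Rinv in H0 by lra.
  replace (/ ((n + 1) / n)) with (n / (n + 1)) in H0 by (field; lra).
  replace ((n + 1) / n - 1) with (/ n) in H by (field; lra).
  replace (n / (n + 1) - 1) with (- / (n + 1)) in H0 by (field; lra).
  lra.
Qed.

Definition dtel (k : nat) : R := / INR (S k) - / INR (S (S k)).

Lemma is_series_dtel : is_series dtel 1.
Proof.
  assert (Hs : forall N, sum_f_R0 dtel N = 1 - / INR (S (S N))).
  { intro N. induction N.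
    - simpl sum_f_R0. unfold dtel. change (INR 1) with 1. field.
      pose proof (INRS_ge1 1). lra.
    - change (sum_f_R0 dtel (S N)) with (sum_f_R0 dtel N + dtel (S N)).
      rewrite IHN. unfold dtel. ring. }
  assert (Hl : is_lim_seq (fun N => / INR (S (S N))) 0).
  { assert (H := is_lim_seq_INR).
    apply is_lim_seq_inv in H; [|discriminate].
    pose proof (proj1 (is_lim_seq_incr_1 _ _) H) as H'.
    pose proof (proj1 (is_lim_seq_incr_1 _ _) H') as H''. exact H''. }
  assert (H2 : is_lim_seq (fun N => 1 - / INR (S (S N))) (1 - 0)).
  { apply is_lim_seq_minus'. apply is_lim_seq_const. exact Hl. }
  replace (1 - 0) with 1 in H2 by ring.
  assert (H3 : is_lim_seq (sum_n dtel) 1).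
  { apply is_lim_seq_ext with (2 := H2). intro; rewrite sum_n_Reals; symmetry; apply Hs. }
  exact H3.
Qed.

Lemma ex_series_ga : ex_series ga.
Proof.
  apply (@ex_series_le R_AbsRing R_CompleteNormedModule) with (b := dtel).
  - intro k. change (norm (ga k)) with (Rabs (ga k)). pose proof (ga_bounds k).
    rewrite Rabs_right by lra. unfold dtel; lra.
  - exists 1. apply is_series_dtel.
Qed.

Lemma bern x k : 0 <= x <= 1 -> 1 - x ^ k <= INR k * (1 - x).
Proof.
  intro Hx. induction k.
  - simpl. lra.
  - rewrite S_INR. change (x ^ S k) with (x * x ^ k).
    assert (x ^ k <= 1) by (apply Rle_trans with (1 ^ k); [apply pow_incr; lra| rewrite pow1; lra]).
    assert (x ^ k * (1 - x) <= 1 * (1 - x)) by (apply Rmult_le_compat_r; lra).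
    nra.
Qed.

Lemma term_lb x k : 0 <= x <= 1 -> ga k - (1 - x) <= x ^ k * ga k.
Proof.
  intro Hx. pose proof (ga_bounds k) as [H0 H1].
  pose proof (bern x k Hx) as Hb.
  assert (Hp : 0 < / INR (S (S k))) by (apply Rinv_0_lt_compat; pose proof (INRS_ge1 (S k)); lra).
  assert (Hg : ga k * INR k <= 1).
  { pose proof (INRS_ge1 k). pose proof (pos_INR k).
    assert (ga k * INR k <= / INR (S k) * INR k) by (apply Rmult_le_compat_r; lra).
    assert (/ INR (S k) * INR k <= 1).
    { rewrite S_INR in *. apply Rmult_le_reg_l with (INR k + 1). lra.
      field_simplify; lra. }
    lra. }
  assert (ga k * (1 - x ^ k) <= ga k * (INR k * (1 - x))) by (apply Rmult_le_compat_l; lra).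
  assert (ga k * INR k * (1 - x) <= 1 * (1 - x)) by (apply Rmult_le_compat_r; lra).
  nra.
Qed.

Lemma sum_lb x N : 0 <= x <= 1 ->
  sum_f_R0 ga N - INR (S N) * (1 - x) <= sum_f_R0 (fun k => x ^ k * ga k) N.
Proof.
  intro Hx. induction N.
  - simpl. pose proof (term_lb x 0 Hx). simpl in H. lra.
  - change (sum_f_R0 ga (S N)) with (sum_f_R0 ga N + ga (S N)).
    change (sum_f_R0 (fun k => x ^ k * ga k) (S N)) with
      (sum_f_R0 (fun k => x ^ k * ga k) N + x ^ (S N) * ga (S N)).
    pose proof (term_lb x (S N) Hx). rewrite (S_INR (S N)). lra.
Qed.

Lemma gamma_cont eps : 0 < eps -> exists delta, 0 < delta /\
  forall x, 0 <= x <= 1 -> 1 - delta < x -> Rabs (gamma_fn x - gamma_fn 1) < eps.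
Proof.
  intro He.
  set (G1 := Series ga).
  assert (E1 : gamma_fn 1 = G1).
  { unfold gamma_fn, G1. apply Series_ext. intro n. rewrite pow1. unfold ga. ring. }
  assert (HG : is_series ga G1) by (apply Series_correct, ex_series_ga).
  destruct (proj1 (filterlim_locally _ _) HG (mkposreal (eps / 2) ltac:(lra))) as [N HN].
  specialize (HN N (Nat.le_refl N)).
  assert (HN' : Rabs (sum_f_R0 ga N - G1) < eps / 2).
  { rewrite <- sum_n_Reals. exact HN. }
  exists (eps / (2 * INR (S N))). split.
  { pose proof (INRS_ge1 N). apply Rdiv_lt_0_compat; lra. }
  intros x Hx Hd.
  rewrite E1.
  assert (Hle : gamma_fn x <= G1).
  { change (Series (fun k => x ^ k * ga k) <= G1). apply Series_le; [|apply ex_series_ga].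
    intro n. pose proof (ga_bounds n). pose proof (pow_le x n ltac:(lra)).
    assert (x ^ n <= 1) by (apply Rle_trans with (1 ^ n); [apply pow_incr; lra| rewrite pow1; lra]).
    split. nra. assert (x ^ n * ga n <= 1 * ga n) by (apply Rmult_le_compat_r; lra). lra. }
  assert (Hge : sum_f_R0 (fun k => x ^ k * ga k) N <= gamma_fn x).
  { change (sum_f_R0 (fun k => x ^ k * ga k) N <= Series (fun k => x ^ k * ga k)). apply partial_le_Series.
    - intro n. pose proof (ga_bounds n). pose proof (pow_le x n ltac:(lra)). nra.
    - apply (@ex_series_le R_AbsRing R_CompleteNormedModule) with (b := ga); [|apply ex_series_ga].
      intro n. change (norm (x ^ n * ga n)) with (Rabs (x ^ n * ga n)).
      pose proof (ga_bounds n). pose proof (pow_le x n ltac:(lra)).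
      assert (x ^ n <= 1) by (apply Rle_trans with (1 ^ n); [apply pow_incr; lra| rewrite pow1; lra]).
      rewrite Rabs_right by nra.
      assert (x ^ n * ga n <= 1 * ga n) by (apply Rmult_le_compat_r; lra). lra. }
  pose proof (sum_lb x N Hx).
  assert (INR (S N) * (1 - x) < eps / 2).
  { pose proof (INRS_ge1 N).
    assert (1 - x < eps / (2 * INR (S N))) by lra.
    apply Rmult_lt_compat_l with (r := INR (S N)) in H1; [|lra].
    replace (INR (S N) * (eps / (2 * INR (S N)))) with (eps / 2) in H1 by (field; lra).
    lra. }
  apply Rabs_def2 in HN'.
  apply Rabs_def1; lra.
Qed.

Section Lims.
Context {T : Type} {F : (T -> Prop) -> Prop} {FF : Filter F}.
Lemma lim_plus (f g : T -> R) a b : filterlim f F (locally a) -> filterlim g F (locally b) ->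
  filterlim (fun t => f t + g t) F (locally (a + b)).
Proof. intros Hf Hg. eapply filterlim_comp_2; [exact Hf|exact Hg|]. exact (@filterlim_plus R_AbsRing R_NormedModule a b). Qed.
Lemma lim_mult (f g : T -> R) a b : filterlim f F (locally a) -> filterlim g F (locally b) ->
  filterlim (fun t => f t * g t) F (locally (a * b)).
Proof. intros Hf Hg. eapply filterlim_comp_2; [exact Hf|exact Hg|]. exact (@filterlim_mult R_AbsRing a b). Qed.
Lemma lim_opp (f : T -> R) a : filterlim f F (locally a) ->
  filterlim (fun t => - f t) F (locally (- a)).
Proof. intros Hf. eapply filterlim_comp; [exact Hf|]. exact (@filterlim_opp R_AbsRing R_NormedModule a). Qed.
Lemma lim_inv (f : T -> R) a : a <> 0 -> filterlim f F (locally a) ->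
  filterlim (fun t => / f t) F (locally (/ a)).
Proof. intros Ha Hf. eapply filterlim_comp; [exact Hf|].
  apply (filterlim_Rbar_inv (Finite a)). intro H; injection H; exact Ha. Qed.
Lemma lim_exp (f : T -> R) a : filterlim f F (locally a) ->
  filterlim (fun t => exp (f t)) F (locally (exp a)).
Proof. intros Hf. eapply filterlim_comp; [exact Hf|]. apply continuous_exp. Qed.
End Lims.

Lemma part1 t : 1 < t ->
  gamma_fn (/ t) = t * ln (t / ((t - 1) * Rpower (somos_sigma t) (t - 1))).
Proof.
  intro Ht. rewrite key by lra. rewrite sigma_eq by lra.
  unfold Rpower. rewrite ln_exp.
  assert (0 < exp ((t - 1) * Series (u (/ t)))) by apply exp_pos.
  rewrite ln_div by (try lra; apply Rmult_lt_0_compat; lra).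
  rewrite ln_mult by lra. rewrite ln_exp. ring.
Qed.

Lemma f_eq t : 0 < t -> t * Rpower (somos_sigma (t + 1)) t =
  (t + 1) * exp (- gamma_fn (/ (t + 1)) / (t + 1)).
Proof.
  intro Ht. pose proof (key (t + 1) ltac:(lra)) as K.
  rewrite sigma_eq by lra. unfold Rpower. rewrite ln_exp.
  set (L := Series (u (/ (t + 1)))) in *.
  replace (t + 1 - 1) with t in K by ring.
  replace (t * L) with (ln (t + 1) - ln t - gamma_fn (/ (t + 1)) / (t + 1))
    by (rewrite K; field; lra).
  unfold Rminus. rewrite !exp_plus, exp_ln by lra. rewrite exp_Ropp, exp_ln by lra.
  replace (- gamma_fn (/ (t + 1)) / (t + 1)) with (- (gamma_fn (/ (t + 1)) / (t + 1))) by (field; lra).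
  field. lra.
Qed.

Lemma g_lim : filterlim (fun t => gamma_fn (/ (t + 1))) (at_right 0) (locally (gamma_fn 1)).
Proof.
  apply filterlim_locally. intro eps.
  destruct (gamma_cont eps (cond_pos eps)) as [d [Hd H]].
  exists (mkposreal d Hd). intros y Hy Hy0.
  change (Rabs (y - 0) < d) in Hy. rewrite Rminus_0_r, Rabs_right in Hy by lra.
  change (Rabs (gamma_fn (/ (y + 1)) - gamma_fn 1) < eps).
  apply H.
  - split. left; apply Rinv_0_lt_compat; lra.
    rewrite <- Rinv_1. apply Rinv_le_contravar; lra.
  - replace (/ (y + 1)) with (1 - y / (y + 1)) by (field; lra).
    assert (y / (y + 1) <= y).
    { replace (y / (y + 1)) with (y - y * y / (y + 1)) by (field; lra).
      assert (0 <= y * y / (y + 1)) by (apply Rmult_le_pos; [nra| left; apply Rinv_0_lt_compat; lra]).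
      lra. }
    lra.
Qed.

Theorem theorem18 :
  (forall t : R, 1 < t ->
     gamma_fn (/ t) = t * ln (t / ((t - 1) * Rpower (somos_sigma t) (t - 1))))
  /\ filterlim (fun t : R => t * Rpower (somos_sigma (t + 1)) t) (at_right 0)
       (locally (exp (- gamma_fn 1))).
Proof.
  split. exact part1.
  apply filterlim_ext_loc with (fun t => (t + 1) * exp (- gamma_fn (/ (t + 1)) / (t + 1))).
  { exists (mkposreal 1 Rlt_0_1). intros y _ Hy. symmetry. apply f_eq. exact Hy. }
  assert (Hid : filterlim (fun t : R => t) (at_right 0) (locally 0)).
  { eapply filterlim_filter_le_1; [apply filter_le_within|apply filterlim_id]. }
  assert (H1 : filterlim (fun t => t + 1) (at_right 0) (locally (0 + 1)))
    by (apply lim_plus; [exact Hid| apply filterlim_const]).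
  rewrite Rplus_0_l in H1.
  replace (exp (- gamma_fn 1)) with (1 * exp (- gamma_fn 1 * / 1)) by (rewrite Rinv_1, !Rmult_1_r, Rmult_1_l; reflexivity).
  apply lim_mult; [exact H1|].
  apply lim_exp. apply lim_mult.
  - apply lim_opp. apply g_lim.
  - apply lim_inv; [lra| exact H1].
Qed.
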